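(* Let $I=\Delta[\Delta,\Delta]\Delta$. Each of the following subspaces $U$ is a subalgebra of $\Delta$ containing $I$, and the listed elements form a basis for a complement of $I$ in $U$ (i.e. a basis of a subspace $U'$ with $U=U'+I$ a direct sum): $U=\Delta$: $A^iB^jC^k$ ($i,j,k\geq0$); $U=\langle A,B\rangle$: $A^iB^j$ ($i,j\geq0$); $U=\langle B,C\rangle$: $B^jC^k$ ($j,k\geq0$); $U=\langle A,C\rangle$: $A^iC^k$ ($i,k\geq0$); $U=\langle A,B\rangle\cap\langle A,C\rangle$: $A^i$ ($i\geq0$); $U=\langle A,B\rangle\cap\langle B,C\rangle$: $B^j$ ($j\geq0$); $U=\langle A,C\rangle\cap\langle B,C\rangle$: $C^k$ ($k\geq0$); $U=\langle A,B\rangle\cap\langle B,C\rangle\cap\langle A,C\rangle$: $1$.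
   Context: Let $\mathbb F$ be a field and fix a nonzero $q\in\mathbb F$ with $q^4\neq 1$. The universal Askey--Wilson algebra $\Delta$ is the associative $\mathbb F$-algebra with 1 with generators $A,B,C$ subject to the relations that each of $A+\frac{qBC-q^{-1}CB}{q^2-q^{-2}}$, $B+\frac{qCA-q^{-1}AC}{q^2-q^{-2}}$, $C+\frac{qAB-q^{-1}BA}{q^2-q^{-2}}$ is central. $[\Delta,\Delta]={\rm Span}\{uv-vu:u,v\in\Delta\}$ and $\Delta[\Delta,\Delta]\Delta$ is the 2-sided ideal generated by it. For $\mathcal S\subseteq\Delta$, $\langle\mathcal S\rangle$ denotes the $\mathbb F$-subalgebra of $\Delta$ generated by $\mathcal S$. *)

(* Defs.v *)
From HB Require Import structures.
From mathcomp Require Import all_boot all_order all_algebra.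
Set Implicit Arguments. Unset Strict Implicit. Unset Printing Implicit Defensive.
Import GRing.Theory.
Local Open Scope ring_scope.

Section AW.
Variable F : fieldType.

Definition central_el (R : algType F) (x : R) : Prop := forall y : R, x * y = y * x.

Definition AW_rel (q : F) (R : algType F) (a b c : R) : Prop :=
  [/\ central_el (a + (q ^+ 2 - q ^- 2)^-1 *: (q *: (b * c) - q^-1 *: (c * b))),
      central_el (b + (q ^+ 2 - q ^- 2)^-1 *: (q *: (c * a) - q^-1 *: (a * c))) &
      central_el (c + (q ^+ 2 - q ^- 2)^-1 *: (q *: (a * b) - q^-1 *: (b * a)))].

(* (D, A, B, C) is the universal Askey--Wilson algebra: it satisfies the
   relations and is initial among F-algebras with three such elements
   (i.e. it is the algebra presented by generators A, B, C and these relations). *)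
Definition is_universal_AW (q : F) (D : algType F) (A B C : D) : Prop :=
  AW_rel q A B C /\
  forall (R : algType F) (a b c : R), AW_rel q a b c ->
    (exists f : D -> R, [/\ linear f, monoid_morphism f, f A = a, f B = b & f C = c]) /\
    (forall f g : D -> R,
        linear f -> monoid_morphism f -> f A = a -> f B = b -> f C = c ->
        linear g -> monoid_morphism g -> g A = a -> g B = b -> g C = c ->
        forall x, f x = g x).

Definition subalg_set (D : algType F) (P : D -> Prop) : Prop :=
  [/\ P 1,
      (forall (k : F) u v, P u -> P v -> P (k *: u + v)) &
      (forall u v, P u -> P v -> P (u * v))].

Definition gen_subalg (D : algType F) (S : D -> Prop) : D -> Prop :=
  fun x => forall P : D -> Prop, subalg_set P -> (forall y, S y -> P y) -> P x.

Definition ideal_set (D : algType F) (P : D -> Prop) : Prop :=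
  [/\ P 0,
      (forall u v, P u -> P v -> P (u + v)) &
      (forall w u, P u -> P (w * u) /\ P (u * w))].

Definition comm_ideal (D : algType F) : D -> Prop :=
  fun x => forall P : D -> Prop, ideal_set P ->
    (forall u v : D, P (u * v - v * u)) -> P x.

Definition basis_of_complement (D : algType F) (U I : D -> Prop)
    (T : eqType) (e : T -> D) : Prop :=
  [/\ subalg_set U,
      (forall x, I x -> U x),
      (forall t, U (e t)),
      (forall (s : seq T) (c : T -> F), uniq s ->
          I (\sum_(t <- s) c t *: e t) -> forall t, t \in s -> c t = 0) &
      (forall u, U u -> exists (s : seq T) (c : T -> F) (y : D),
          I y /\ u = \sum_(t <- s) c t *: e t + y)].

End AW.

(* Main.v *)
From HB Require Import structures.
From mathcomp Require Import all_boot all_order all_algebra.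
From mathcomp Require Import ring.
From mathcomp Require Import mpoly.
From Stdlib Require Import ClassicalDescription.
Require Import Defs.
Set Implicit Arguments. Unset Strict Implicit. Unset Printing Implicit Defensive.
Import GRing.Theory.
Local Open Scope ring_scope.

Section Gen.
Variables (F : fieldType) (D : algType F) (P : D -> Prop).
Hypothesis HP1 : P 1.
Hypothesis HPl : forall (k : F) u v, P u -> P v -> P (k *: u + v).
Hypothesis HPm : forall u v, P u -> P v -> P (u * v).

Definition Pb (x : D) : bool := if excluded_middle_informative (P x) then true else false.
Lemma PbP x : reflect (P x) (Pb x).
Proof. rewrite /Pb; case: excluded_middle_informative => h; constructor => //. Qed.

Lemma P0 : P 0.
Proof. by have := HPl (-1) HP1 HP1; rewrite scaleN1r addNr. Qed.

Lemma Pb_closed : GRing.subsemialg_closed (Pb : {pred D}).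
Proof.
split.
- exact/PbP.
- split; first exact/PbP/P0.
  by move=> u v /PbP hu /PbP hv; apply/PbP; have := HPl 1 hu hv; rewrite scale1r.
- by move=> a u /PbP hu; apply/PbP; have := HPl a hu P0; rewrite addr0.
- by move=> u v /PbP hu /PbP hv; apply/PbP; exact: HPm.
Qed.

Definition PS := {x : D | Pb x}.
HB.instance Definition _ := [isSub of PS for (@sval D (fun x => Pb x)) ].
HB.instance Definition _ := [Choice of PS by <:].
HB.instance Definition _ := GRing.SubChoice_isSubAlgebra.Build F D (Pb : {pred D}) PS Pb_closed.

Lemma val_lin : linear (val : PS -> D).
Proof. by move=> a u v; rewrite /= ?GRing.valD ?GRing.valZ. Qed.
Lemma val_mul : monoid_morphism (val : PS -> D).
Proof. exact: GRing.valM1. Qed.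

Lemma PS_central (z : PS) : central_el (val z) -> central_el z.
Proof. move=> h y; apply: val_inj; by rewrite !GRing.valM h. Qed.

Variables (q : F) (A B C : D).
Hypothesis hD : is_universal_AW q A B C.
Hypotheses (hA : P A) (hB : P B) (hC : P C).

Lemma gen_all_sub x : P x.
Proof.
case: hD => hAW hU.
pose a : PS := exist _ A (introT (PbP A) hA).
pose b : PS := exist _ B (introT (PbP B) hB).
pose c : PS := exist _ C (introT (PbP C) hC).
have hAWs : AW_rel q a b c.
  case: hAW => h1 h2 h3; split; apply: PS_central;
  by rewrite ?(GRing.valD, GRing.valZ, GRing.valM, GRing.valB) /=.
case: (hU PS a b c hAWs) => [[f [fl fm fa fb fc]] _].
have := (hU D A B C hAW).2 (fun x => val (f x)) id.
move=> /(_ _ _ _ _ _ _ _ _ _ _ x) <-.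
- exact/PbP/(valP (f x)).
- by move=> k u v /=; rewrite fl val_lin.
- split; first by rewrite /= fm.1 (val_mul).1.
  by move=> u v /=; rewrite fm.2 (val_mul).2.
- by rewrite /= fa.
- by rewrite /= fb.
- by rewrite /= fc.
- by [].
- by split.
all: by [].
Qed.
End Gen.

Section Basics.
Variables (F : fieldType) (D : algType F).

Definition cm (x y : D) := x * y - y * x.

Lemma cmDr x y z : cm x (y + z) = cm x y + cm x z.
Proof. by rewrite /cm mulrDr mulrDl opprD addrACA. Qed.
Lemma cmDl x y z : cm (x + y) z = cm x z + cm y z.
Proof. by rewrite /cm mulrDr mulrDl opprD addrACA. Qed.
Lemma cmZr k x y : cm x (k *: y) = k *: cm x y.
Proof. by rewrite /cm -scalerAr -scalerAl scalerBr. Qed.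
Lemma cmZl k x y : cm (k *: x) y = k *: cm x y.
Proof. by rewrite /cm -scalerAr -scalerAl scalerBr. Qed.
Lemma cmNr x y : cm x (- y) = - cm x y.
Proof. by rewrite -scaleN1r cmZr scaleN1r. Qed.
Lemma cmBr x y z : cm x (y - z) = cm x y - cm x z.
Proof. by rewrite cmDr cmNr. Qed.
Lemma cmMr x y z : cm x (y * z) = cm x y * z + y * cm x z.
Proof.
rewrite /cm mulrBl mulrBr !mulrA addrA; congr (_ + _).
by rewrite -addrA addNr addr0.
Qed.
Lemma cmMl x y z : cm (x * y) z = x * cm y z + cm x z * y.
Proof.
rewrite /cm mulrBl mulrBr !mulrA addrA; congr (_ + _).
by rewrite -addrA addNr addr0.
Qed.
Lemma cmxx x : cm x x = 0.
Proof. by rewrite /cm subrr. Qed.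
Lemma cmC x y : cm y x = - cm x y.
Proof. by rewrite /cm opprB. Qed.
Lemma cm1r x : cm x 1 = 0.
Proof. by rewrite /cm mulr1 mul1r subrr. Qed.
Lemma cm1l x : cm 1 x = 0.
Proof. by rewrite /cm mulr1 mul1r subrr. Qed.
Lemma cm_central g x : central_el g -> cm x g = 0.
Proof. by move=> h; rewrite /cm h subrr. Qed.

Section Id.
Variable Q : D -> Prop.
Hypothesis hQ : ideal_set Q.
Lemma iQ0 : Q 0. Proof. by case: hQ. Qed.
Lemma iQD u v : Q u -> Q v -> Q (u + v). Proof. by case: hQ => _ h _; apply: h. Qed.
Lemma iQMl w u : Q u -> Q (w * u). Proof. by case: hQ => _ _ h /(h w) []. Qed.
Lemma iQMr w u : Q u -> Q (u * w). Proof. by case: hQ => _ _ h /(h w) []. Qed.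
Lemma iQZ k u : Q u -> Q (k *: u).
Proof. by move=> h; rewrite -[u]mul1r scalerAl; apply: iQMl. Qed.
Lemma iQN u : Q u -> Q (- u). Proof. by move=> h; rewrite -scaleN1r; apply: iQZ. Qed.
Lemma iQB u v : Q u -> Q v -> Q (u - v). Proof. by move=> h1 h2; apply: iQD => //; apply: iQN. Qed.
End Id.

Lemma ci_ideal : ideal_set (@comm_ideal F D).
Proof.
split.
- by move=> P hP _; apply: iQ0.
- by move=> u v hu hv P hP hc; apply: iQD => //; [apply: hu|apply: hv].
- move=> w u hu; split=> P hP hc; [apply: iQMl|apply: iQMr] => //; exact: hu.
Qed.
Lemma ci_comm (u v : D) : comm_ideal (u * v - v * u).
Proof. by move=> P _ h. Qed.

Lemma subalg_gen (S : D -> Prop) : subalg_set (gen_subalg S).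
Proof.
split.
- by move=> P [h1 _ _].
- by move=> k u v hu hv P hP hS; case: (hP) => _ h _; apply: h; [apply: hu|apply: hv].
- by move=> u v hu hv P hP hS; case: (hP) => _ _ h; apply: h; [apply: hu|apply: hv].
Qed.
Lemma gen_in (S : D -> Prop) x : S x -> gen_subalg S x.
Proof. by move=> h P _; apply. Qed.

Section Sub.
Variable L : D -> Prop.
Hypothesis hL : subalg_set L.
Lemma sL1 : L 1. Proof. by case: hL. Qed.
Lemma sLl k u v : L u -> L v -> L (k *: u + v). Proof. by case: hL => _ h _; apply: h. Qed.
Lemma sLM u v : L u -> L v -> L (u * v). Proof. by case: hL => _ _ h; apply: h. Qed.
Lemma sL0 : L 0. Proof. by have := sLl (-1) sL1 sL1; rewrite scaleN1r addNr. Qed.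
Lemma sLD u v : L u -> L v -> L (u + v).
Proof. by move=> h1 h2; have := sLl 1 h1 h2; rewrite scale1r. Qed.
Lemma sLZ k u : L u -> L (k *: u).
Proof. by move=> h1; have := sLl k h1 sL0; rewrite addr0. Qed.
Lemma sLN u : L u -> L (- u). Proof. by move=> h; rewrite -scaleN1r; apply: sLZ. Qed.
Lemma sLB u v : L u -> L v -> L (u - v). Proof. by move=> h1 h2; apply: sLD => //; apply: sLN. Qed.
End Sub.
End Basics.

Section AB.
Variables (F : fieldType) (q : F) (D : algType F) (A B C : D).
Hypotheses (hq0 : q != 0) (hq4 : q ^+ 4 != 1) (hAW : AW_rel q A B C).
Hypothesis hgen : forall P : D -> Prop, subalg_set P -> P A -> P B -> P C -> forall x, P x.

Let L := gen_subalg (fun x => x = A \/ x = B).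
Let hL : subalg_set L := subalg_gen _.
Let LA : L A. Proof. by apply: gen_in; left. Qed.
Let LB : L B. Proof. by apply: gen_in; right. Qed.
Let s := (q ^+ 2 - q ^- 2)^-1.
Let G := s *: (q *: (A * B) - q^-1 *: (B * A)).
Let g := C + G.
Let hg : central_el g. Proof. by case: hAW. Qed.
Let LG : L G.
Proof. by apply: (sLZ hL) => //; apply: (sLB hL) => //; apply: (sLZ hL) => //; apply: (sLM hL). Qed.
Let hC : C = g - G. Proof. by rewrite /g addrK. Qed.

Lemma q2_neq0 : q ^+ 2 - q ^- 2 != 0.
Proof.
apply: contra hq4 => /eqP h.
have e : q ^+ 4 - 1 = q ^+ 2 * (q ^+ 2 - q ^- 2) by field.
by rewrite -subr_eq0 e h mulr0.
Qed.
Lemma q1_neq0 : q - q^-1 != 0.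
Proof.
apply: contra hq4 => /eqP h.
have e : q ^+ 4 - 1 = (q ^+ 3 + q) * (q - q^-1) by field.
by rewrite -subr_eq0 e h mulr0.
Qed.
Let s_neq0 : s != 0. Proof. by rewrite invr_eq0 q2_neq0. Qed.

Lemma comm_all (Q : D -> Prop) (hQ : ideal_set Q) :
  Q (cm A B) -> Q (cm A C) -> Q (cm B C) -> forall u v, Q (cm u v).
Proof.
move=> hAB hAC hBC.
have H1 : forall x, (x = A \/ x = B \/ x = C) -> forall v, Q (cm x v).
  move=> x hx; apply: hgen.
  - split; first by rewrite cm1r; apply: (iQ0 hQ).
    + by move=> k u v hu hv; rewrite cmDr cmZr; apply: (iQD hQ) => //; apply: (iQZ hQ).
    + by move=> u v hu hv; rewrite cmMr; apply: (iQD hQ) => //; [apply: (iQMr hQ)|apply: (iQMl hQ)].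
  - case: hx => [->|[->|->]]; rewrite ?cmxx; first [exact: (iQ0 hQ) | assumption | (rewrite cmC; apply: (iQN hQ); assumption)].
  - case: hx => [->|[->|->]]; rewrite ?cmxx; first [exact: (iQ0 hQ) | assumption | (rewrite cmC; apply: (iQN hQ); assumption)].
  - case: hx => [->|[->|->]]; rewrite ?cmxx; first [exact: (iQ0 hQ) | assumption | (rewrite cmC; apply: (iQN hQ); assumption)].
apply: (hgen (P := fun u => forall v, Q (cm u v))).
- split; first by move=> v; rewrite cm1l; apply: (iQ0 hQ).
  + by move=> k u v hu hv w; rewrite cmDl cmZl; apply: (iQD hQ) => //; apply: (iQZ hQ).
  + by move=> u v hu hv w; rewrite cmMl; apply: (iQD hQ) => //; [apply: (iQMl hQ)|apply: (iQMr hQ)].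
- by apply: H1; left.
- by apply: H1; right; left.
- by apply: H1; right; right.
Qed.

Definition K t z := forall l1 l2, L l1 -> L l2 -> L (g ^+ t * l1 * z * l2).

Lemma K0 t : K t 0.
Proof. by move=> l1 l2 _ _; rewrite mulr0 mul0r; apply: (sL0 hL). Qed.
Lemma KD t u v : K t u -> K t v -> K t (u + v).
Proof. by move=> hu hv l1 l2 h1 h2; rewrite mulrDr mulrDl; apply: (sLD hL) => //; [apply: hu|apply: hv]. Qed.
Lemma KZ t k u : K t u -> K t (k *: u).
Proof. by move=> hu l1 l2 h1 h2; rewrite -scalerAr -scalerAl; apply: (sLZ hL) => //; apply: hu. Qed.
Lemma KN t u : K t u -> K t (- u).
Proof. by move=> h; rewrite -scaleN1r; apply: KZ. Qed.
Lemma KB t u v : K t u -> K t v -> K t (u - v).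
Proof. by move=> h1 h2; apply: KD => //; apply: KN. Qed.
Lemma KMl t l z : L l -> K t z -> K t (l * z).
Proof. by move=> hl hz l1 l2 h1 h2; rewrite mulrA -(mulrA _ l1 l); apply: hz => //; apply: (sLM hL). Qed.
Lemma KMr t l z : L l -> K t z -> K t (z * l).
Proof. by move=> hl hz l1 l2 h1 h2; rewrite !mulrA -(mulrA _ l); apply: hz => //; apply: (sLM hL). Qed.

Lemma gshift t l1 z l2 : g ^+ t.+1 * l1 * z * l2 = g ^+ t * l1 * (g * z) * l2.
Proof.
rewrite exprSr -!mulrA; congr (_ * _).
by rewrite !mulrA hg.
Qed.
Lemma Kg t z : K t (g * z) -> K t.+1 z.
Proof. by move=> h l1 l2 h1 h2; rewrite gshift; apply: h. Qed.
Lemma Kg' t z : K t.+1 z -> K t (g * z).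
Proof. by move=> h l1 l2 h1 h2; rewrite -gshift; apply: h. Qed.

Lemma Kcomm t : K t (cm A B) -> forall l, L l -> K t (cm A l) /\ K t (cm B l).
Proof.
move=> h l hl; suff: L l /\ K t (cm A l) /\ K t (cm B l) by case.
apply: (hl (fun l => L l /\ K t (cm A l) /\ K t (cm B l))).
- split; first by split; [exact: (sL1 hL)| rewrite !cm1r; split; apply: K0].
  + move=> k u v [hu [h1 h2]] [hv [h3 h4]]; split; first exact: (sLl hL).
    by rewrite !cmDr !cmZr; split; apply: KD => //; apply: KZ.
  + move=> u v [hu [h1 h2]] [hv [h3 h4]]; split; first exact: (sLM hL).
    by rewrite !cmMr; split; apply: KD; [apply: KMr|apply: KMl|apply: KMr|apply: KMl].
- move=> y [->|->].
  + by split=> //; rewrite cmxx cmC; split; [apply: K0|apply: KN].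
  + by split=> //; rewrite cmxx; split; [|apply: K0].
Qed.

Let X1 := cm A B * G + B * cm A G.
Let X2 := cm A G * B + G * cm A B.

Lemma key : g * cm A B = (q - q^-1)^-1 *: (q *: X1 - q^-1 *: X2).
Proof.
have ha : central_el (A + s *: (q *: (B * C) - q^-1 *: (C * B))) by case: hAW.
have h0 := cm_central A ha.
rewrite cmDr cmxx add0r cmZr in h0.
move/eqP: h0; rewrite scaler_eq0 (negbTE s_neq0) /= => /eqP h0.
rewrite cmBr !cmZr !cmMr in h0.
have eAC : cm A C = - cm A G by rewrite hC cmBr cm_central // add0r.
rewrite eAC in h0.
have e1 : cm A B * C + B * - cm A G = g * cm A B - X1.
  by rewrite hC mulrBr -hg mulrN /X1 opprD addrA.
have e2 : - cm A G * B + C * cm A B = g * cm A B - X2.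
  by rewrite hC mulrBl /X2 mulNr addrC -addrA -opprD [G * _ + _]addrC.
rewrite e1 e2 !scalerBr in h0.
apply: (scalerI q1_neq0); rewrite scalerA mulfV ?q1_neq0 // scale1r.
apply/eqP; rewrite scalerBl -subr_eq0; apply/eqP; rewrite -h0.
by rewrite !opprB addrACA [RHS]addrACA; congr (_ + _); exact: addrC.
Qed.

Lemma Kstep t : K t (cm A B) -> K t.+1 (cm A B).
Proof.
move=> h; apply: Kg; rewrite key; apply: KZ; apply: KB; apply: KZ.
- apply: KD; first exact: KMr.
  by apply: KMl => //; exact: (Kcomm h LG).1.
- apply: KD; last exact: KMl.
  by apply: KMr => //; exact: (Kcomm h LG).1.
Qed.

Lemma Kall t : K t (cm A B).
Proof.
elim: t => [|t IH]; last exact: Kstep.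
move=> l1 l2 h1 h2; rewrite expr0 mul1r; apply: (sLM hL) => //; apply: (sLM hL) => //.
by apply: (sLB hL) => //; apply: (sLM hL).
Qed.

Definition J z := forall t, K t z.

Lemma JMl w z : J z -> J (w * z).
Proof.
move: w z; apply: (hgen (P := fun w => forall z, J z -> J (w * z))).
- split; first by move=> z hz; rewrite mul1r.
  + move=> k u v hu hv z hz t; rewrite mulrDl -scalerAl.
    by apply: KD; [apply: KZ; apply: hu|apply: hv].
  + by move=> u v hu hv z hz; rewrite -mulrA; apply: hu; apply: hv.
- by move=> z hz t; apply: KMl.
- by move=> z hz t; apply: KMl.
- move=> z hz t; rewrite hC mulrBl; apply: KB; last by apply: KMl.
  by apply: Kg'.
Qed.

Lemma JMr w z : J z -> J (z * w).
Proof.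
move: w z; apply: (hgen (P := fun w => forall z, J z -> J (z * w))).
- split; first by move=> z hz; rewrite mulr1.
  + move=> k u v hu hv z hz t; rewrite mulrDr -scalerAr.
    by apply: KD; [apply: KZ; apply: hu|apply: hv].
  + by move=> u v hu hv z hz; rewrite mulrA; apply: hv; apply: hu.
- by move=> z hz t; apply: KMr.
- by move=> z hz t; apply: KMr.
- move=> z hz t; rewrite hC mulrBr; apply: KB; last by apply: KMr.
  by rewrite -hg; apply: Kg'.
Qed.

Lemma J_ideal : ideal_set J.
Proof.
split; first by move=> t; apply: K0.
- by move=> u v hu hv t; apply: KD.
- by move=> w u hu; split; [apply: JMl|apply: JMr].
Qed.

Lemma I_sub_AB x : comm_ideal x -> L x.
Proof.
move=> hx.
have hJ : J x.
  apply: hx; first exact: J_ideal.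
  apply: (comm_all J_ideal); first exact: Kall.
  - rewrite hC cmBr cm_central // add0r => t; apply: KN.
    exact: (Kcomm (Kall t) LG).1.
  - rewrite hC cmBr cm_central // add0r => t; apply: KN.
    exact: (Kcomm (Kall t) LG).2.
have := hJ 0%N 1 1 (sL1 hL) (sL1 hL).
by rewrite expr0 !mul1r mulr1.
Qed.
End AB.

Definition o0 : 'I_3 := @Ordinal 3 0 isT.
Definition o1 : 'I_3 := @Ordinal 3 1 isT.
Definition o2 : 'I_3 := @Ordinal 3 2 isT.
Definition mon (i j k : nat) : 'X_{1..3} := (U_(o0) *+ i + U_(o1) *+ j + U_(o2) *+ k)%MM.

Lemma e01 : (o0 == o1) = false. Proof. by []. Qed.
Lemma e10 : (o1 == o0) = false. Proof. by []. Qed.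
Lemma e02 : (o0 == o2) = false. Proof. by []. Qed.
Lemma e20 : (o2 == o0) = false. Proof. by []. Qed.
Lemma e12 : (o1 == o2) = false. Proof. by []. Qed.
Lemma e21 : (o2 == o1) = false. Proof. by []. Qed.
Lemma mon0 i j k : mon i j k o0 = i.
Proof. by rewrite /mon !mnmDE !mulmnE !mnm1E !(eqxx, e01, e10, e02, e20, e12, e21) !mul1n !mul0n ?addn0 ?add0n. Qed.
Lemma mon1 i j k : mon i j k o1 = j.
Proof. by rewrite /mon !mnmDE !mulmnE !mnm1E !(eqxx, e01, e10, e02, e20, e12, e21) !mul1n !mul0n ?addn0 ?add0n. Qed.
Lemma mon2 i j k : mon i j k o2 = k.
Proof. by rewrite /mon !mnmDE !mulmnE !mnm1E !(eqxx, e01, e10, e02, e20, e12, e21) !mul1n !mul0n ?addn0 ?add0n. Qed.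

Lemma mon_inj i j k i' j' k' : mon i j k = mon i' j' k' -> [/\ i = i', j = j' & k = k'].
Proof.
by move=> h; split; [rewrite -(mon0 i j k) h mon0|rewrite -(mon1 i j k) h mon1|rewrite -(mon2 i j k) h mon2].
Qed.

Section Poly.
Variables (F : fieldType) (D : algType F) (A B C : D).
Variable f : D -> {mpoly F[3]}.
Hypotheses (fl : linear f) (fm : monoid_morphism f).
Hypotheses (fA : f A = 'X_[U_(o0)]) (fB : f B = 'X_[U_(o1)]) (fC : f C = 'X_[U_(o2)]).

Lemma f0 : f 0 = 0.
Proof. have h := fl 1 0 0; rewrite !scale1r addr0 in h; by apply: (addrI (f 0)); rewrite addr0 -h. Qed.
Lemma fD u v : f (u + v) = f u + f v.
Proof. by have := fl 1 u v; rewrite !scale1r. Qed.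
Lemma fZ k u : f (k *: u) = k *: f u.
Proof. by have := fl k u 0; rewrite !addr0 f0 addr0. Qed.
Lemma fM u v : f (u * v) = f u * f v. Proof. exact: fm.2. Qed.
Lemma f1 : f 1 = 1. Proof. exact: fm.1. Qed.
Lemma fX u n : f (u ^+ n) = f u ^+ n.
Proof. by elim: n => [|n IH]; rewrite ?expr0 ?f1 // !exprS fM IH. Qed.
Lemma fsum (T : Type) (s : seq T) (G : T -> D) : f (\sum_(t <- s) G t) = \sum_(t <- s) f (G t).
Proof. exact: (big_morph f fD f0). Qed.

Lemma fmon i j k : f (A ^+ i * B ^+ j * C ^+ k) = 'X_[mon i j k].
Proof. by rewrite !fM !fX fA fB fC !mpolyXn -!mpolyXD. Qed.

Lemma f_I x : comm_ideal x -> f x = 0.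
Proof.
move=> hx; apply: (hx (fun x => f x = 0)).
- split; first exact: f0.
  + by move=> u v hu hv; rewrite fD hu hv addr0.
  + by move=> w u hu; rewrite !fM hu mulr0 mul0r.
- by move=> u v; rewrite /= -[u * v - v * u]/(u * v + - (v * u)) -scaleN1r fD fZ !fM mulrC scaleN1r subrr.
Qed.

Lemma coef_sum (T : Type) (s : seq T) (c : T -> F) (mn : T -> 'X_{1..3}) m :
  (\sum_(t <- s) c t *: 'X_[mn t])@_m = \sum_(t <- s) c t * (mn t == m)%:R.
Proof. by rewrite raddf_sum; apply: eq_bigr => t _; rewrite /= mcoeffZ mcoeffX. Qed.

Lemma coef_sum_uniq (T : eqType) (s : seq T) (c : T -> F) (mn : T -> 'X_{1..3}) t0 :
  injective mn -> uniq s -> t0 \in s ->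
  (\sum_(t <- s) c t *: 'X_[mn t])@_(mn t0) = c t0.
Proof.
move=> hi hs ht; rewrite coef_sum (bigD1_seq t0) //= eqxx mulr1 big1 ?addr0 //.
by move=> t htt; rewrite (inj_eq hi) (negbTE htt) mulr0.
Qed.

Lemma coef_sum_out (T : Type) (s : seq T) (c : T -> F) (mn : T -> 'X_{1..3}) m :
  (forall t, mn t != m) -> (\sum_(t <- s) c t *: 'X_[mn t])@_m = 0.
Proof. by move=> h; rewrite coef_sum big1 // => t _; rewrite (negbTE (h t)) mulr0. Qed.

Lemma indep (T : eqType) (e : T -> D) (mn : T -> 'X_{1..3}) :
  injective mn -> (forall t, f (e t) = 'X_[mn t]) ->
  forall (s : seq T) (c : T -> F), uniq s ->
  comm_ideal (\sum_(t <- s) c t *: e t) -> forall t, t \in s -> c t = 0.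
Proof.
move=> hi he s c hs hI t ht.
have := f_I hI; rewrite fsum => h.
have : (\sum_(t <- s) f (c t *: e t))@_(mn t) = 0 by rewrite h mcoeff0.
under eq_bigr do rewrite fZ he.
by rewrite coef_sum_uniq.
Qed.

Lemma vanish (T : eqType) (e1 : T -> D) (mn1 : T -> 'X_{1..3})
  (T2 : Type) (e2 : T2 -> D) (mn2 : T2 -> 'X_{1..3}) :
  injective mn1 -> (forall t, f (e1 t) = 'X_[mn1 t]) -> (forall t, f (e2 t) = 'X_[mn2 t]) ->
  forall s c y s' d y' u, uniq s -> comm_ideal y -> u = \sum_(t <- s) c t *: e1 t + y ->
  comm_ideal y' -> u = \sum_(t <- s') d t *: e2 t + y' ->
  forall t, t \in s -> (forall t', mn2 t' != mn1 t) -> c t = 0.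
Proof.
move=> hi h1 h2 s c y s' d y' u hs hy hu hy' hu' t ht hne.
have E : f (\sum_(t <- s) c t *: e1 t) = f (\sum_(t <- s') d t *: e2 t).
  by have := congr1 f (etrans (esym hu) hu'); rewrite !fD (f_I hy) (f_I hy') !addr0.
rewrite !fsum in E.
have E1 : \sum_(t <- s) f (c t *: e1 t) = \sum_(t <- s) c t *: 'X_[mn1 t].
  by apply: eq_bigr => x _; rewrite fZ h1.
have E2 : \sum_(t <- s') f (d t *: e2 t) = \sum_(t <- s') d t *: 'X_[mn2 t].
  by apply: eq_bigr => x _; rewrite fZ h2.
rewrite E1 E2 in E.
have := congr1 (mcoeff (mn1 t)) E.
by rewrite coef_sum_uniq // coef_sum_out.
Qed.
End Poly.

Section Conv.
Variables (F : fieldType) (D : algType F) (T : eqType) (e : T -> D).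
Lemma conv (l : seq (T * F)) : exists (s : seq T) (c : T -> F),
  uniq s /\ \sum_(p <- l) p.2 *: e p.1 = \sum_(t <- s) c t *: e t.
Proof.
elim: l => [|[t k] l [s [c [hs he]]]]; first by exists [::], (fun _ => 0); rewrite !big_nil.
rewrite big_cons he /=; case: (boolP (t \in s)) => ht.
- exists s, (fun x => if x == t then c x + k else c x); split => //.
  rewrite (bigD1_seq t) //= [in RHS](bigD1_seq t) //= eqxx.
  under [in RHS]eq_bigr => x hx do rewrite (negbTE hx).
  by rewrite scalerDl addrA [k *: _ + _]addrC.
- exists (t :: s), (fun x => if x == t then k else c x); split; first by rewrite /= ht.
  rewrite big_cons eqxx; congr (_ + _); apply: eq_big_seq => x hx.
  have hxt : x != t by apply: contraNneq ht => <-.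
  by rewrite (negbTE hxt).
Qed.
End Conv.

Section Span.
Variables (F : fieldType) (D : algType F).
Let I := @comm_ideal F D.
Let hI := @ci_ideal F D.

Lemma iI_sum (X : Type) (r : seq X) (G : X -> D) : (forall i, I (G i)) -> I (\sum_(i <- r) G i).
Proof. by move=> h; apply: (big_ind I) => //; [apply: (iQ0 hI)|apply: (iQD hI)]. Qed.

Variables (T : eqType) (e : T -> D) (op : T -> T -> T).
Hypothesis hop : forall t t', I (e t * e t' - e (op t t')).
Variable t1 : T.
Hypothesis he1 : e t1 = 1.

Definition SpanI u := exists (l : seq (T * F)) y, I y /\ u = \sum_(p <- l) p.2 *: e p.1 + y.

Lemma span_gen t : SpanI (e t).
Proof.
exists [:: (t, 1)], 0; split; first exact: (iQ0 hI).
by rewrite big_cons big_nil scale1r !addr0.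
Qed.

Lemma span_subalg : subalg_set SpanI.
Proof.
split; first by rewrite -he1; apply: span_gen.
- move=> k u v [l1 [y1 [h1 ->]]] [l2 [y2 [h2 ->]]].
  exists (map (fun p => (p.1, k * p.2)) l1 ++ l2), (k *: y1 + y2); split.
    by apply: (iQD hI) => //; apply: (iQZ hI).
  rewrite big_cat big_map /= scalerDr scaler_sumr (eq_bigr (fun i => (k * i.2) *: e i.1)); last by move=> i _; rewrite scalerA.
  by rewrite addrACA.
- move=> u v [l1 [y1 [h1 ->]]] [l2 [y2 [h2 ->]]].
  set S1 := \sum_(p <- l1) _; set S2 := \sum_(p <- l2) _.
  set l := map (fun pp : (T * F) * (T * F) => (op pp.1.1 pp.2.1, pp.1.2 * pp.2.2))
             [seq (p, p') | p <- l1, p' <- l2].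
  set Lm := \sum_(p <- l) p.2 *: e p.1.
  exists l, ((S1 + y1) * (S2 + y2) - Lm); split; last by rewrite [Lm + _]addrC subrK.
  have -> : (S1 + y1) * (S2 + y2) - Lm = (S1 * S2 - Lm) + (S1 * y2 + y1 * (S2 + y2)).
    by rewrite mulrDl mulrDr -(addrA (S1 * S2)) addrAC.
  apply: (iQD hI); last by apply: (iQD hI); [apply: (iQMl hI)|apply: (iQMr hI)].
  rewrite /Lm /l big_map big_allpairs /S1 /S2 mulr_suml.
  rewrite -sumrB; apply: iI_sum => p; rewrite mulr_sumr -sumrB; apply: iI_sum => p' /=.
  by rewrite -scalerAl -scalerAr scalerA -scalerBr; apply: (iQZ hI); exact: hop.
Qed.

Lemma span_conv u : SpanI u -> exists (s : seq T) (c : T -> F) (y : D),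
  uniq s /\ I y /\ u = \sum_(t <- s) c t *: e t + y.
Proof.
move=> [l [y [hy ->]]]; have [s [c [hs ->]]] := conv e l.
by exists s, c, y.
Qed.
End Span.

Section MonRel.
Variables (F : fieldType) (D : algType F).
Let I := @comm_ideal F D.
Let hI := @ci_ideal F D.

Lemma I_swap (w x y z : D) : I (w * (x * y) * z - w * (y * x) * z).
Proof.
rewrite -mulrBl -mulrBr; apply: (iQMr hI); apply: (iQMl hI); exact: ci_comm.
Qed.
Lemma I_trans a b c : I (a - b) -> I (b - c) -> I (a - c).
Proof. by move=> h1 h2; have := iQD hI h1 h2; rewrite addrA subrK. Qed.

Lemma monrel2 (x y : D) a b c d :
  I (x ^+ a * y ^+ b * (x ^+ c * y ^+ d) - x ^+ (a + c) * y ^+ (b + d)).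
Proof.
have -> : x ^+ a * y ^+ b * (x ^+ c * y ^+ d) = x ^+ a * (y ^+ b * x ^+ c) * y ^+ d
  by rewrite !mulrA.
have -> : x ^+ (a + c) * y ^+ (b + d) = x ^+ a * (x ^+ c * y ^+ b) * y ^+ d
  by rewrite !exprD !mulrA.
exact: I_swap.
Qed.

Lemma monrel3 (x y z : D) i j k i' j' k' :
  I (x ^+ i * y ^+ j * z ^+ k * (x ^+ i' * y ^+ j' * z ^+ k')
     - x ^+ (i + i') * y ^+ (j + j') * z ^+ (k + k')).
Proof.
apply: (I_trans (b := (x ^+ i * y ^+ j) * (x ^+ i' * z ^+ k) * (y ^+ j' * z ^+ k'))).
  have -> : x ^+ i * y ^+ j * z ^+ k * (x ^+ i' * y ^+ j' * z ^+ k') =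
    (x ^+ i * y ^+ j) * (z ^+ k * x ^+ i') * (y ^+ j' * z ^+ k') by rewrite !mulrA.
  exact: I_swap.
apply: (I_trans (b := x ^+ i * (x ^+ i' * y ^+ j) * (z ^+ k * y ^+ j' * z ^+ k'))).
  have -> : (x ^+ i * y ^+ j) * (x ^+ i' * z ^+ k) * (y ^+ j' * z ^+ k') =
    x ^+ i * (y ^+ j * x ^+ i') * (z ^+ k * y ^+ j' * z ^+ k') by rewrite !mulrA.
  exact: I_swap.
have -> : x ^+ i * (x ^+ i' * y ^+ j) * (z ^+ k * y ^+ j' * z ^+ k') =
  (x ^+ i * x ^+ i' * y ^+ j) * (z ^+ k * y ^+ j') * z ^+ k' by rewrite !mulrA.
have -> : x ^+ (i + i') * y ^+ (j + j') * z ^+ (k + k') =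
  (x ^+ i * x ^+ i' * y ^+ j) * (y ^+ j' * z ^+ k) * z ^+ k' by rewrite !exprD !mulrA.
exact: I_swap.
Qed.
End MonRel.
Lemma restrict (F : fieldType) (D : algType F) (T T' : eqType) (e : T -> D) (e' : T' -> D)
  (P : pred T) (h : T -> T') (g : T' -> T) (s : seq T) (c : T -> F) :
  (forall t, P t -> e t = e' (h t)) -> (forall t, P t -> g (h t) = t) ->
  (forall t, t \in s -> ~~ P t -> c t = 0) ->
  \sum_(t <- s) c t *: e t = \sum_(t' <- map h (filter P s)) c (g t') *: e' t'.
Proof.
move=> he hg hc; rewrite big_map big_filter [LHS](bigID P) /=.
rewrite [X in _ + X]big1_seq ?addr0; last first.
  by move=> t /andP [hnp hts]; rewrite hc ?scale0r.
by apply: eq_bigr => t ht; rewrite hg ?he.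
Qed.

Lemma subalg_and (F : fieldType) (D : algType F) (P Q : D -> Prop) :
  subalg_set P -> subalg_set Q -> subalg_set (fun x => P x /\ Q x).
Proof.
move=> hP hQ; split; first by split; [apply: (sL1 hP)|apply: (sL1 hQ)].
- by move=> k u v [h1 h2] [h3 h4]; split; [apply: (sLl hP)|apply: (sLl hQ)].
- by move=> u v [h1 h2] [h3 h4]; split; [apply: (sLM hP)|apply: (sLM hQ)].
Qed.

Lemma sLX (F : fieldType) (D : algType F) (L : D -> Prop) x n :
  subalg_set L -> L x -> L (x ^+ n).
Proof.
move=> hL hx; elim: n => [|n IH]; first by rewrite expr0; apply: (sL1 hL).
by rewrite exprS; apply: (sLM hL).
Qed.

Lemma gen_ext (F : fieldType) (D : algType F) (S S' : D -> Prop) u :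
  (forall x, S x -> S' x) -> gen_subalg S u -> gen_subalg S' u.
Proof. by move=> h hu P hP hS; apply: hu => // x /h; apply: hS. Qed.

Lemma AW_rot (F : fieldType) (q : F) (D : algType F) (a b c : D) :
  AW_rel q a b c -> AW_rel q b c a.
Proof. by case. Qed.

Lemma span2 (F : fieldType) (D : algType F) (x y u : D) :
  gen_subalg (fun z => z = x \/ z = y) u ->
  exists (s : seq (nat * nat)) (c : nat * nat -> F) (w : D),
    uniq s /\ comm_ideal w /\ u = \sum_(t <- s) c t *: (x ^+ t.1 * y ^+ t.2) + w.
Proof.
move=> hu; apply: span_conv; apply: hu.
- apply: (@span_subalg _ _ _ _ (fun t t' => (t.1 + t'.1, t.2 + t'.2)%N) _ (0, 0)%N).
    by move=> t t'; apply: monrel2.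
  by rewrite !expr0 mulr1.
- move=> z [->|->].
  + by have := span_gen (fun t : nat * nat => x ^+ t.1 * y ^+ t.2) (1, 0)%N; rewrite /= expr1 expr0 mulr1.
  + by have := span_gen (fun t : nat * nat => x ^+ t.1 * y ^+ t.2) (0, 1)%N; rewrite /= expr1 expr0 mul1r.
Qed.

Section Main.
Variables (F : fieldType) (q : F) (D : algType F) (A B C : D).
Hypotheses (hq0 : q != 0) (hq4 : q ^+ 4 != 1) (hD : is_universal_AW q A B C).

Let hAW : AW_rel q A B C := hD.1.
Lemma hgen (P : D -> Prop) : subalg_set P -> P A -> P B -> P C -> forall x, P x.
Proof. case=> h1 hl hm hA hB hC x; exact: (gen_all_sub h1 hl hm hD hA hB hC x). Qed.

Lemma span3 u : exists (s : seq (nat * nat * nat)) (c : nat * nat * nat -> F) (w : D),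
    uniq s /\ comm_ideal w /\ u = \sum_(t <- s) c t *: (A ^+ t.1.1 * B ^+ t.1.2 * C ^+ t.2) + w.
Proof.
apply: span_conv; move: u; apply: hgen.
- apply: (@span_subalg _ _ _ _ (fun t t' => (t.1.1 + t'.1.1, t.1.2 + t'.1.2, t.2 + t'.2)%N)
     _ (0, 0, 0)%N).
    by move=> t t'; apply: monrel3.
  by rewrite !expr0 !mulr1.
- by have := span_gen (fun t : nat * nat * nat => A ^+ t.1.1 * B ^+ t.1.2 * C ^+ t.2) (1, 0, 0)%N;
    rewrite /= expr1 !expr0 !mulr1.
- by have := span_gen (fun t : nat * nat * nat => A ^+ t.1.1 * B ^+ t.1.2 * C ^+ t.2) (0, 1, 0)%N;
    rewrite /= expr1 !expr0 mulr1 mul1r.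
- by have := span_gen (fun t : nat * nat * nat => A ^+ t.1.1 * B ^+ t.1.2 * C ^+ t.2) (0, 0, 1)%N;
    rewrite /= expr1 !expr0 !mul1r.
Qed.

Lemma IAB x : comm_ideal x -> gen_subalg (fun z => z = A \/ z = B) x.
Proof. exact: (I_sub_AB hq0 hq4 hAW hgen). Qed.
Lemma IBC x : comm_ideal x -> gen_subalg (fun z => z = B \/ z = C) x.
Proof.
apply: (I_sub_AB hq0 hq4 (AW_rot hAW)).
by move=> P hP hB hC hA; apply: hgen.
Qed.
Lemma IAC x : comm_ideal x -> gen_subalg (fun z => z = A \/ z = C) x.
Proof.
move=> hx; apply: (gen_ext (S := fun z => z = C \/ z = A)); first by move=> z; case; auto.
apply: (I_sub_AB hq0 hq4 (AW_rot (AW_rot hAW))) => //.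
by move=> P hP hC hA hB; apply: hgen.
Qed.

End Main.

Unset Implicit Arguments.
Theorem proposition11p16 (F : fieldType) (q : F) (hq0 : q != 0) (hq4 : q ^+ 4 != 1)
  (D : algType F) (A B C : D) (hD : is_universal_AW q A B C) :
  let I := comm_ideal (D := D) in
  let AB := gen_subalg (fun x => x = A \/ x = B) in
  let BC := gen_subalg (fun x => x = B \/ x = C) in
  let AC := gen_subalg (fun x => x = A \/ x = C) in
  [/\ basis_of_complement (fun _ => True) I
        (fun t : nat * nat * nat => A ^+ t.1.1 * B ^+ t.1.2 * C ^+ t.2),
      basis_of_complement AB I (fun t : nat * nat => A ^+ t.1 * B ^+ t.2),
      basis_of_complement BC I (fun t : nat * nat => B ^+ t.1 * C ^+ t.2),
      basis_of_complement AC I (fun t : nat * nat => A ^+ t.1 * C ^+ t.2) &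
    [/\ basis_of_complement (fun x => AB x /\ AC x) I (fun i : nat => A ^+ i),
      basis_of_complement (fun x => AB x /\ BC x) I (fun j : nat => B ^+ j),
      basis_of_complement (fun x => AC x /\ BC x) I (fun k : nat => C ^+ k) &
      basis_of_complement (fun x => AB x /\ BC x /\ AC x) I (fun _ : unit => (1 : D))]].
Proof.
move=> I AB BC AC.
have hAW := hD.1.
have hAWp : AW_rel q ('X_[U_(o0)] : {mpoly F[3]}) 'X_[U_(o1)] 'X_[U_(o2)].
  by split=> y; apply: mulrC.
have [[f [fl fm fa fb fc]] _] := hD.2 _ _ _ _ hAWp.
have hAB : subalg_set AB by apply: subalg_gen.
have hBC : subalg_set BC by apply: subalg_gen.
have hAC : subalg_set AC by apply: subalg_gen.
have LA : AB A by apply: gen_in; left.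
have LB : AB B by apply: gen_in; right.
have LB' : BC B by apply: gen_in; left.
have LC' : BC C by apply: gen_in; right.
have LA'' : AC A by apply: gen_in; left.
have LC'' : AC C by apply: gen_in; right.
have IAB := IAB hq0 hq4 hD.
have IBC := IBC hq0 hq4 hD.
have IAC := IAC hq0 hq4 hD.
have fAB i j : f (A ^+ i * B ^+ j) = 'X_[mon i j 0].
  by rewrite -(fmon fm fa fb fc) expr0 mulr1.
have fBC j k : f (B ^+ j * C ^+ k) = 'X_[mon 0 j k].
  by rewrite -(fmon fm fa fb fc) expr0 mul1r.
have fAC i k : f (A ^+ i * C ^+ k) = 'X_[mon i 0 k].
  by rewrite -(fmon fm fa fb fc) expr0 mulr1.
have fA i : f (A ^+ i) = 'X_[mon i 0 0].
  by rewrite -(fmon fm fa fb fc) !expr0 !mulr1.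
have fB j : f (B ^+ j) = 'X_[mon 0 j 0].
  by rewrite -(fmon fm fa fb fc) !expr0 mulr1 mul1r.
have fC k : f (C ^+ k) = 'X_[mon 0 0 k].
  by rewrite -(fmon fm fa fb fc) !expr0 !mul1r.
have f1' (t : unit) : f 1 = 'X_[mon 0 0 0].
  by rewrite -(fmon fm fa fb fc) !expr0 !mul1r.
have spanD := span2 (F := F) (D := D).
split; [split|split|split|split|split; split].
- by split.
- by [].
- by [].
- apply: (indep fl fm (mn := fun t => mon t.1.1 t.1.2 t.2)).
    by move=> [[i j] k] [[i' j'] k'] /mon_inj [/= -> -> ->].
  by move=> t; apply: fmon.
- by move=> u _; have [s [c [y [_ [hy ->]]]]] := span3 hD u; exists s, c, y.
- exact: hAB.
- exact: IAB.
- by move=> t; apply: (sLM hAB); apply: (sLX _ hAB).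
- apply: (indep fl fm (mn := fun t => mon t.1 t.2 0)).
    by move=> [i j] [i' j'] /mon_inj [/= -> -> _].
  by move=> t; apply: fAB.
- by move=> u hu; have [s [c [y [_ [hy ->]]]]] := spanD _ _ _ hu; exists s, c, y.
- exact: hBC.
- exact: IBC.
- by move=> t; apply: (sLM hBC); apply: (sLX _ hBC).
- apply: (indep fl fm (mn := fun t => mon 0 t.1 t.2)).
    by move=> [i j] [i' j'] /mon_inj [/= _ -> ->].
  by move=> t; apply: fBC.
- by move=> u hu; have [s [c [y [_ [hy ->]]]]] := spanD _ _ _ hu; exists s, c, y.
- exact: hAC.
- exact: IAC.
- by move=> t; apply: (sLM hAC); apply: (sLX _ hAC).
- apply: (indep fl fm (mn := fun t => mon t.1 0 t.2)).
    by move=> [i j] [i' j'] /mon_inj [/= -> _ ->].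
  by move=> t; apply: fAC.
- by move=> u hu; have [s [c [y [_ [hy ->]]]]] := spanD _ _ _ hu; exists s, c, y.
- exact: subalg_and.
- by move=> x hx; split; [apply: IAB|apply: IAC].
- by move=> t; split; [apply: (sLX _ hAB)|apply: (sLX _ hAC)].
- apply: (indep fl fm (mn := fun i => mon i 0 0)).
    by move=> i i' /mon_inj [].
  by move=> t; apply: fA.
- move=> u [hu1 hu2].
  have [s [c [y [hs [hy hu]]]]] := spanD _ _ _ hu1.
  have [s' [d [y' [_ [hy' hu']]]]] := spanD _ _ _ hu2.
  have hv := vanish fl fm (mn1 := fun t : nat * nat => mon t.1 t.2 0) (mn2 := fun t : nat * nat => mon t.1 0 t.2)
    (e1 := fun t : nat * nat => A ^+ t.1 * B ^+ t.2) (e2 := fun t : nat * nat => A ^+ t.1 * C ^+ t.2).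
  exists (map fst (filter (fun t => t.2 == 0%N) s)), (fun i => c (i, 0%N)), y; split => //.
  rewrite hu; congr (_ + _); apply: restrict.
  + by move=> [i j] /= /eqP ->; rewrite expr0 mulr1.
  + by move=> [i j] /= /eqP ->.
  + move=> t ht hnp; apply: (hv _ _ _ _ _ _ _ _ _ _ hs hy hu hy' hu' t ht).
    * by move=> [i j] [i' j'] /mon_inj [/= -> -> _].
    * by move=> t'; apply: fAB.
    * by move=> t'; apply: fAC.
    * move=> t'; apply/eqP => /mon_inj [_ h _]; by rewrite -h eqxx in hnp.
- exact: subalg_and.
- by move=> x hx; split; [apply: IAB|apply: IBC].
- by move=> t; split; [apply: (sLX _ hAB)|apply: (sLX _ hBC)].
- apply: (indep fl fm (mn := fun j => mon 0 j 0)).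
    by move=> i i' /mon_inj [].
  by move=> t; apply: fB.
- move=> u [hu1 hu2].
  have [s [c [y [hs [hy hu]]]]] := spanD _ _ _ hu1.
  have [s' [d [y' [_ [hy' hu']]]]] := spanD _ _ _ hu2.
  have hv := vanish fl fm (mn1 := fun t : nat * nat => mon t.1 t.2 0) (mn2 := fun t : nat * nat => mon 0 t.1 t.2)
    (e1 := fun t : nat * nat => A ^+ t.1 * B ^+ t.2) (e2 := fun t : nat * nat => B ^+ t.1 * C ^+ t.2).
  exists (map snd (filter (fun t => t.1 == 0%N) s)), (fun j => c (0%N, j)), y; split => //.
  rewrite hu; congr (_ + _); apply: restrict.
  + by move=> [i j] /= /eqP ->; rewrite expr0 mul1r.
  + by move=> [i j] /= /eqP ->.
  + move=> t ht hnp; apply: (hv _ _ _ _ _ _ _ _ _ _ hs hy hu hy' hu' t ht).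
    * by move=> [i j] [i' j'] /mon_inj [/= -> -> _].
    * by move=> t'; apply: fAB.
    * by move=> t'; apply: fBC.
    * move=> t'; apply/eqP => /mon_inj [h _ _]; by rewrite -h eqxx in hnp.
- exact: subalg_and.
- by move=> x hx; split; [apply: IAC|apply: IBC].
- by move=> t; split; [apply: (sLX _ hAC)|apply: (sLX _ hBC)].
- apply: (indep fl fm (mn := fun k => mon 0 0 k)).
    by move=> i i' /mon_inj [].
  by move=> t; apply: fC.
- move=> u [hu1 hu2].
  have [s [c [y [hs [hy hu]]]]] := spanD _ _ _ hu1.
  have [s' [d [y' [_ [hy' hu']]]]] := spanD _ _ _ hu2.
  have hv := vanish fl fm (mn1 := fun t : nat * nat => mon t.1 0 t.2) (mn2 := fun t : nat * nat => mon 0 t.1 t.2)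
    (e1 := fun t : nat * nat => A ^+ t.1 * C ^+ t.2) (e2 := fun t : nat * nat => B ^+ t.1 * C ^+ t.2).
  exists (map snd (filter (fun t => t.1 == 0%N) s)), (fun k => c (0%N, k)), y; split => //.
  rewrite hu; congr (_ + _); apply: restrict.
  + by move=> [i j] /= /eqP ->; rewrite expr0 mul1r.
  + by move=> [i j] /= /eqP ->.
  + move=> t ht hnp; apply: (hv _ _ _ _ _ _ _ _ _ _ hs hy hu hy' hu' t ht).
    * by move=> [i j] [i' j'] /mon_inj [/= -> _ ->].
    * by move=> t'; apply: fAC.
    * by move=> t'; apply: fBC.
    * move=> t'; apply/eqP => /mon_inj [h _ _]; by rewrite -h eqxx in hnp.
- by apply: subalg_and => //; apply: subalg_and.
- by move=> x hx; split; [apply: IAB|split; [apply: IBC|apply: IAC]].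
- by move=> t; split; [apply: (sL1 hAB)|split; [apply: (sL1 hBC)|apply: (sL1 hAC)]].
- apply: (indep fl fm (mn := fun _ : unit => mon 0 0 0)).
    by move=> [] [].
  by move=> t; apply: f1'.
- move=> u [hu1 [hu2 hu3]].
  have [s [c [y [hs [hy hu]]]]] := spanD _ _ _ hu1.
  have [s' [d [y' [_ [hy' hu']]]]] := spanD _ _ _ hu2.
  have [s'' [d' [y'' [_ [hy'' hu'']]]]] := spanD _ _ _ hu3.
  have hv1 := vanish fl fm (mn1 := fun t : nat * nat => mon t.1 t.2 0) (mn2 := fun t : nat * nat => mon 0 t.1 t.2)
    (e1 := fun t : nat * nat => A ^+ t.1 * B ^+ t.2) (e2 := fun t : nat * nat => B ^+ t.1 * C ^+ t.2).
  have hv2 := vanish fl fm (mn1 := fun t : nat * nat => mon t.1 t.2 0) (mn2 := fun t : nat * nat => mon t.1 0 t.2)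
    (e1 := fun t : nat * nat => A ^+ t.1 * B ^+ t.2) (e2 := fun t : nat * nat => A ^+ t.1 * C ^+ t.2).
  exists (map (fun _ => tt) (filter (fun t => t == (0, 0)%N) s)), (fun _ => c (0, 0)%N), y.
  split => //.
  rewrite hu; congr (_ + _); apply: restrict.
  + by move=> [i j] /= /eqP [-> ->]; rewrite !expr0 mulr1.
  + by move=> [i j] /= /eqP [-> ->].
  + have hinj : injective (fun t : nat * nat => mon t.1 t.2 0).
      by move=> [i j] [i' j'] /mon_inj [/= -> -> _].
    move=> [i j] ht hnp.
    have [hi|hi] := eqVneq i 0%N.
    * subst i; apply: (hv2 hinj _ _ _ _ _ _ _ _ _ hs hy hu hy'' hu'' _ ht).
      - by move=> t'; apply: fAB.
      - by move=> t'; apply: fAC.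
      - move=> t'; apply/eqP => /mon_inj [_ /= h _]; by rewrite -h eqxx in hnp.
    * apply: (hv1 hinj _ _ _ _ _ _ _ _ _ hs hy hu hy' hu' _ ht).
      - by move=> t'; apply: fAB.
      - by move=> t'; apply: fBC.
      - move=> t'; apply/eqP => /mon_inj [/= h _ _]; by rewrite -h eqxx in hi.
Qed.
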